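(* The set $\mathrm{Diag}\,\mathbb P=\{p^{(k)}_k:k\in\mathbb N\}$ is not (R)-dense. Moreover, $\lim_{k\to+\infty}p^{(k+1)}_{k+1}/p^{(k)}_k=+\infty$, and $R^d(\mathrm{Diag}\,\mathbb P)\cap(0,+\infty)=\emptyset$.
   Context: Let $p_n$ denote the $n$-th prime number. Define $p^{(0)}_n=n$ and recursively $p^{(k+1)}_n=p_{p^{(k)}_n}$ for $k\in\mathbb N_0$. For $A\subset\mathbb N$, its ratio set is $R(A)=\{a/b:a,b\in A\}$; $A$ is (R)-dense if $R(A)$ is dense in $(0,+\infty)$. For $B\subset(0,+\infty)$, $B^d$ denotes the set of accumulation points of $B$, and $R^d(A)=(R(A))^d$. *)

(* Defs.v *)
From mathcomp Require Import all_boot.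
From Stdlib Require Import Reals.

Set Implicit Arguments.
Unset Strict Implicit.
Unset Printing Implicit Defensive.

Lemma next_prime_ex (m : nat) : exists p, (m < p) && prime p.
Proof. case: (prime_above m) => p H1 H2; exists p; by rewrite H1 H2. Qed.

Definition next_prime (m : nat) : nat := ex_minn (next_prime_ex m).

(* nth_prime n = p_n, 1-indexed: p_1 = 2, p_2 = 3, p_3 = 5, ...
   (p_0 := 1 is a junk value, never used in the statement since only
   indices >= 1 occur). p_{n+1} = least prime above p_n. *)
Fixpoint nth_prime (n : nat) : nat :=
  match n with
  | 0 => 1
  | n'.+1 => next_prime (nth_prime n')
  end.

Definition iter_prime (k n : nat) : nat := iter k nth_prime n.

Definition DiagP (a : nat) : Prop := exists k, (0 < k)%N /\ a = iter_prime k k.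

Open Scope R_scope.

Definition ratio_set (A : nat -> Prop) (x : R) : Prop :=
  exists a b, A a /\ A b /\ x = INR a / INR b.

Definition R_dense (A : nat -> Prop) : Prop :=
  forall x y, 0 < x -> x < y -> exists r, ratio_set A r /\ x < r < y.

Definition accum_points (B : R -> Prop) (x : R) : Prop :=
  forall eps, 0 < eps -> exists y, B y /\ y <> x /\ Rabs (y - x) < eps.

(* Main.v *)
Require Import Defs.
From mathcomp Require Import all_boot.
From Stdlib Require Import Reals.
From mathcomp Require Import zify.
From Stdlib Require Import Lra.
From mathcomp Require Import ssrnat.
Local Open Scope nat_scope.
Fixpoint pic (x : nat) : nat := if x is x'.+1 then pic x' + prime x'.+1 else 0.
Fixpoint Pr (n m : nat) : nat :=
  if m is m'.+1 then (if (n < m'.+1) && prime m'.+1 then m'.+1 * Pr n m' else Pr n m') else 1.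

Lemma coprime_fact p n : prime p -> n < p -> coprime p n`!.
Proof.
move=> pp; elim: n => [|n IH] lt; first by rewrite coprimen1.
rewrite factS coprimeMr IH ?andbT; last lia.
by rewrite prime_coprime // gtnNdvd.
Qed.

Lemma Pr_props n d :
  [/\ (n.+1) ^ (pic (n + d) - pic n) <= Pr n (n + d),
      Pr n (n + d) * n`! %| (n + d)`! & coprime (Pr n (n + d)) n`!].
Proof.
elim: d => [|d [IH1 IH2 IH3]].
  rewrite addn0 /=.
  have -> : Pr n n = 1.
    suff H : forall m, m <= n -> Pr n m = 1 by apply: H.
    elim=> [|m IHm] //= km.
    by rewrite ifN ?IHm //; lia.
  by rewrite subnn mul1n coprime1n.
rewrite addnS /= ltnS leq_addr /=.
case: (boolP (prime (n + d).+1)) => pr /=.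
- have -> : pic (n + d) + 1 - pic n = (pic (n + d) - pic n).+1.
    suff: pic n <= pic (n + d) by lia.
    elim: d {IH1 IH2 IH3 pr} => [|d IHd]; first by rewrite addn0.
    by rewrite addnS /=; lia.
  split.
  + rewrite expnS; apply: leq_mul => //; lia.
  + by rewrite factS -mulnA dvdn_pmul2l.
  + by rewrite coprimeMl IH3 coprime_fact //; lia.
- rewrite addn0; split => //.
  by rewrite factS dvdn_mull.
Qed.

Lemma pic_mono a b : a <= b -> pic a <= pic b.
Proof.
move=> ab; rewrite -(subnKC ab); elim: (b - a) => [|d IH]; first by rewrite addn0.
by rewrite addnS /=; lia.
Qed.

Lemma pic_le x : pic x <= x.
Proof. elim: x => //= x IH; case: (prime _) => /=; lia. Qed.

Lemma binom_le n : 'C(n.*2, n) <= 4 ^ n.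
Proof.
have := expnDn 1 1 n.*2.
rewrite -(expnM 2 2 n) mul2n => ->.
have hn : n < n.*2.+1 by lia.
rewrite (bigD1 (Ordinal hn)) //= !exp1n muln1.
by rewrite muln1 leq_addr.
Qed.

Lemma cheb n : 0 < n -> (n.+1) ^ (pic n.*2 - pic n) <= 4 ^ n.
Proof.
move=> n0.
have [H1 H2 H3] := Pr_props n n.
rewrite addnn in H1 H2 H3.
apply: (leq_trans H1); apply: (leq_trans _ (binom_le n)).
apply: dvdn_leq; first by rewrite bin_gt0; lia.
have := bin_fact (leq_addr n n).
rewrite addnK addnn => E.
rewrite -E mulnA dvdn_pmul2r ?fact_gt0 // in H2.
by rewrite -(Gauss_dvdl _ H3).
Qed.

Lemma cheb2 c n : 4 ^ c <= n.+1 -> 0 < n -> c * (pic n.*2 - pic n) <= n.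
Proof.
move=> hc n0.
have := cheb n n0.
move=> h.
have : (4 ^ c) ^ (pic n.*2 - pic n) <= 4 ^ n.
  apply: leq_trans h.
  case E: (pic n.*2 - pic n) => [|t]; first by [].
  by rewrite leq_exp2r.
by rewrite -expnM leq_exp2l.
Qed.

Lemma pic_bound c : exists K, forall x, c * pic x <= 2 * x + c * K.
Proof.
exists (2 * 4 ^ c + 3) => x0.
suff H : forall B x, x <= B -> c * pic x <= 2 * x + c * (2 * 4 ^ c + 3) by exact: (H x0).
elim=> [|B IH] x xB.
  have -> : x = 0 by lia.
  rewrite /=; lia.
case: (leqP x (2 * 4 ^ c + 3)) => hx.
  have := pic_le x.
  move=> h; have := leq_mul (leqnn c) (leq_trans h hx); lia.
set m := x./2.
have hm : x = m.*2 + odd x by rewrite /m -{1}(odd_double_half x); lia.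
have hm4 : 4 ^ c <= m.+1 by lia.
have hcm : c <= m.
  have : c < 4 ^ c by apply: ltn_expl.
  lia.
have h1 := cheb2 c m hm4 (ltac:(lia) : 0 < m).
have h2 : pic x <= pic m.*2 + 1.
  rewrite hm; case: (odd x) => /=; last by rewrite addn0; lia.
  rewrite addn1 /=; case: (prime _) => /=; lia.
have h3 := IH m (ltac:(lia)).
have h4 : pic m <= pic m.*2 by apply: pic_mono; lia.
nia.
Qed.

Lemma next_primeP m : m < next_prime m /\ prime (next_prime m).
Proof.
rewrite /next_prime; case: ex_minnP => p /andP[h1 h2] _; by split.
Qed.

Lemma nth_prime_lt n : nth_prime n < nth_prime n.+1.
Proof. by case: (next_primeP (nth_prime n)). Qed.

Lemma nth_prime_prime n : prime (nth_prime n.+1).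
Proof. by case: (next_primeP (nth_prime n)). Qed.

Lemma nth_prime_mono a b : a <= b -> nth_prime a <= nth_prime b.
Proof.
move=> ab; rewrite -(subnKC ab); elim: (b - a) => [|d IH]; first by rewrite addn0.
rewrite addnS; apply: leq_trans IH (ltnW (nth_prime_lt _)).
Qed.

Lemma nth_prime_ge n : n < nth_prime n.
Proof. elim: n => [|n IH] //; have := nth_prime_lt n; lia. Qed.

Lemma pic_nth n : n <= pic (nth_prime n).
Proof.
elim: n => [|n IH] //.
have h1 := nth_prime_lt n; have h2 := nth_prime_prime n.
case E: (nth_prime n.+1) h1 h2 => [|p] h1 h2; first by [].
rewrite /= h2.
have : pic (nth_prime n) <= pic p by apply: pic_mono; lia.
lia.
Qed.

Lemma prime_linear c : exists N, forall n, N <= n -> c * n <= nth_prime n.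
Proof.
have [K HK] := pic_bound (4 * c).
exists (2 * K) => n hn.
have h1 := HK (nth_prime n).
have h2 := leq_mul (leqnn (4 * c)) (pic_nth n).
nia.
Qed.

Lemma iter_mono k a b : a <= b -> iter_prime k a <= iter_prime k b.
Proof.
move=> ab; elim: k => [|k IH] //=; exact: nth_prime_mono.
Qed.

Lemma iter_ge k n : n <= iter_prime k n.
Proof.
elim: k => [|k IH] //; rewrite /iter_prime iterS.
have := nth_prime_ge (iter k nth_prime n); rewrite /iter_prime in IH; lia.
Qed.

Definition dd k := iter_prime k k.

Lemma dd_step k : nth_prime (dd k) <= dd k.+1.
Proof.
rewrite /dd /iter_prime iterS; apply: nth_prime_mono.
exact: (iter_mono k k k.+1 (leqnSn k)).
Qed.

Lemma dd_mono a b : a <= b -> dd a <= dd b.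
Proof.
move=> ab; rewrite -(subnKC ab); elim: (b - a) => [|d IH]; first by rewrite addn0.
rewrite addnS; apply: leq_trans IH _.
have := dd_step (a + d); have := nth_prime_ge (dd (a + d)); lia.
Qed.

Lemma dd_ge k : k <= dd k.
Proof. exact: iter_ge. Qed.

Lemma dd_growth c : exists N, forall k, N <= k -> c * dd k <= dd k.+1.
Proof.
have [N HN] := prime_linear c; exists N => k hk.
apply: leq_trans (dd_step k); apply: HN; apply: leq_trans hk (dd_ge k).
Qed.

Open Scope R_scope.

Lemma fin1 (f : nat -> R) x N : exists eps, 0 < eps /\
  forall i, (i <= N)%N -> f i <> x -> eps <= Rabs (f i - x).
Proof.
elim: N => [|N [e [he H]]].
  case: (Req_dec (f 0%N) x) => h.
    exists 1; split; first lra. move=> i hi; have -> : i = 0%N by lia. done.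
  exists (Rabs (f 0%N - x)); split; first by apply: Rabs_pos_lt; lra.
  move=> i hi; have -> : i = 0%N by lia. move=> _; lra.
case: (Req_dec (f N.+1) x) => h.
  exists e; split => // i hi hne.
  case: (leqP i N) => hiN; first by apply: H.
  have E : i = N.+1 by lia. by rewrite E in hne.
exists (Rmin e (Rabs (f N.+1 - x))); split.
  apply: Rmin_pos => //; apply: Rabs_pos_lt; lra.
move=> i hi hne.
case: (leqP i N) => hiN.
  apply: Rle_trans (Rmin_l _ _) (H i hiN hne).
have E : i = N.+1 by lia. rewrite E; exact: Rmin_r.
Qed.

Lemma fin2 (g : nat -> nat -> R) x N : exists eps, 0 < eps /\
  forall a b, (a <= N)%N -> (b <= N)%N -> g a b <> x -> eps <= Rabs (g a b - x).
Proof.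
suff H : forall A, exists eps, 0 < eps /\
  forall a b, (a <= A)%N -> (b <= N)%N -> g a b <> x -> eps <= Rabs (g a b - x).
  exact: H.
elim=> [|A [e [he H]]].
  have [e [he H]] := fin1 (g 0%N) x N.
  exists e; split => // a b ha hb; have -> : a = 0%N by lia. exact: H.
have [e2 [he2 H2]] := fin1 (g A.+1) x N.
exists (Rmin e e2); split; first exact: Rmin_pos.
move=> a b ha hb hne.
case: (leqP a A) => haA.
  apply: Rle_trans (Rmin_l _ _) (H a b haA hb hne).
have E : a = A.+1 by lia. rewrite E in hne *.
apply: Rle_trans (Rmin_r _ _) (H2 b hb hne).
Qed.

Lemma dd_pos k : 0 < INR (dd k.+1).
Proof. apply: lt_0_INR; apply/ltP; have := dd_ge k.+1; lia. Qed.

Lemma ratio_big c a b N : (forall k, (N <= k)%N -> (c * dd k <= dd k.+1)%N) ->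
  (N < a)%N -> (b < a)%N -> (0 < b)%N -> INR c <= INR (dd a) / INR (dd b).
Proof.
move=> HN ha hab hb.
case: a ha hab => [|a] // ha hab.
have h1 : (c * dd b <= dd a.+1)%N.
  apply: leq_trans (HN a (ltac:(lia))).
  apply: leq_mul => //; apply: dd_mono; lia.
case: b hb hab h1 => [|b] // _ hab h1.
have hp := dd_pos b.
apply/(Rmult_le_reg_r (INR (dd b.+1))) => //.
rewrite /Rdiv Rmult_assoc Rinv_l; last lra.
rewrite Rmult_1_r -mult_INR; apply: le_INR; apply/leP; exact: h1.
Qed.

Lemma part3 (x : R) : 0 < x -> ~ accum_points (ratio_set DiagP) x.
Proof.
move=> hx Hacc.
have [c hc] := INR_unbounded (x + / x).
have hix : 0 < / x by apply: Rinv_0_lt_compat.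
have hcx : INR c - x > 0 by lra.
have hc0 : 0 < INR c by lra.
have hic : / INR c < x.
  rewrite -[X in _ < X](Rinv_inv x); apply: Rinv_lt_contravar; last lra.
  by apply: Rmult_lt_0_compat.
have [N HN] := dd_growth c.
have [e [he He]] := fin2 (fun a b => INR (dd a) / INR (dd b)) x N.
pose e1 := if Req_EM_T x 1 is left _ then 1 else Rabs (1 - x).
have he1 : 0 < e1.
  rewrite /e1; case: (Req_EM_T x 1) => h; first lra.
  apply: Rabs_pos_lt; lra.
pose eps := Rmin (Rmin e e1) (Rmin (INR c - x) (x - / INR c)).
have heps : 0 < eps.
  apply: Rmin_pos; apply: Rmin_pos => //; lra.
have hee : eps <= e by apply: Rle_trans (Rmin_l _ _) (Rmin_l _ _).
have hee1 : eps <= e1 by apply: Rle_trans (Rmin_l _ _) (Rmin_r _ _).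
have hec : eps <= INR c - x by apply: Rle_trans (Rmin_r _ _) (Rmin_l _ _).
have hec2 : eps <= x - / INR c by apply: Rle_trans (Rmin_r _ _) (Rmin_r _ _).
have [y [[a [b [[ka [hka ->]] [[kb [hkb ->]] ->]]]] [hyx hyd]]] := Hacc eps heps.
rewrite -/(dd ka) -/(dd kb) in hyx hyd.
case: ka hka hyx hyd => [|ka] // _ hyx hyd.
case: kb hkb hyx hyd => [|kb] // _ hyx hyd.
have pa := dd_pos ka; have pb := dd_pos kb.
case: (ltngtP ka kb) => hab.
- case: (leqP kb.+1 N) => hbN.
    have := He ka.+1 kb.+1 (ltac:(lia)) hbN hyx; lra.
  have h := ratio_big c kb.+1 ka.+1 N HN hbN (ltac:(lia)) (ltac:(lia)).
  have E : INR (dd ka.+1) / INR (dd kb.+1) = / (INR (dd kb.+1) / INR (dd ka.+1)).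
    field; lra.
  have : INR (dd ka.+1) / INR (dd kb.+1) <= / INR c.
    rewrite E; apply: Rinv_le_contravar => //.
  move: hyd; rewrite Rabs_minus_sym => hyd.
  have := Rle_abs (x - INR (dd ka.+1) / INR (dd kb.+1)); lra.
- case: (leqP ka.+1 N) => haN.
    have := He ka.+1 kb.+1 haN (ltac:(lia)) hyx; lra.
  have h := ratio_big c ka.+1 kb.+1 N HN haN (ltac:(lia)) (ltac:(lia)).
  have := Rle_abs (INR (dd ka.+1) / INR (dd kb.+1) - x); lra.
- rewrite hab in hyx hyd.
  have E : INR (dd kb.+1) / INR (dd kb.+1) = 1 by field; lra.
  rewrite E in hyx hyd.
  move: hee1; rewrite /e1; case: (Req_EM_T x 1) => h; first by rewrite h in hyx.
  lra.
Qed.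

Open Scope R_scope.

Theorem theorem12 :
  ~ R_dense DiagP /\
  (forall M : R, exists N : nat, forall k : nat, (N <= k)%nat -> (1 <= k)%nat ->
     M < INR (iter_prime k.+1 k.+1) / INR (iter_prime k k)) /\
  (forall x : R, 0 < x -> ~ accum_points (ratio_set DiagP) x).
Proof.
split; last split; last exact: part3.
- move=> Hd; apply: (part3 1 Rlt_0_1) => eps heps.
  have [r [hr h]] := Hd 1 (1 + eps) Rlt_0_1 (ltac:(lra)).
  exists r; split => //; split; first lra.
  rewrite Rabs_right; lra.
- move=> M.
  have [c hc] := INR_unbounded M.
  have [N HN] := dd_growth c.
  exists N => k hk k1.
  case: k hk k1 => [|k] // hk _.
  have h := ratio_big c k.+2 k.+1 N HN (ltac:(lia)) (ltac:(lia)) (ltac:(lia)).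
  rewrite /dd in h; lra.
Qed.
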